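(* Let $p_t,p_g\in[0,1]$ with $p_tp_g<1$. For every instance $\mathcal{I}$ and binary prediction $\hat{\mathbf{O}}$, the algorithm \textsc{SmoothMerge} with parameters $p_t,p_g$ satisfies \[ \mathbb{E}[|\textsc{Alg}(\mathcal{I})|] \ge \max\Big\{ |\textsc{Opt}(\mathcal{I})|\cdot(1-\eta)\cdot p_t(1-p_g),\ \frac{p_g-p_tp_g}{1-p_tp_g}\cdot|\textsc{Greedy}(\mathcal{I})| \Big\}, \] where $\eta=\eta(\mathcal{I},\hat{\mathbf{O}})$ is the prediction error.
   Context: Online interval scheduling: intervals $I_j$ with release time $r_j$, deadline $d_j$, length $l_j=d_j-r_j$ arrive online in non-decreasing order of release time; each must be irrevocably accepted or rejected upon arrival; accepted intervals must be pairwise non-overlapping; objective: maximize total accepted length $|\cdot|$. $\textsc{Opt}(\mathcal{I})$ is an optimal offline solution. A binary prediction $\hat{\mathbf{O}}=(\hat o_1,\dots,\hat o_n)\in\{0,1\}^n$ is revealed online with the intervals. $\textsc{Trust}$ is the algorithm accepting $I_j$ iff $\hat o_j=1$; $\textsc{Greedy}$ accepts each arriving interval iff it does not overlap any interval previously accepted by $\textsc{Greedy}$. Prediction error: $\eta(\mathcal{I},\hat{\mathbf{O}})=\frac{|\textsc{Opt}(\mathcal{I})|-|\textsc{Trust}(\mathcal{I},\hat{\mathbf{O}})|}{|\textsc{Opt}(\mathcal{I})|}$. \textsc{SmoothMerge}$(p_t,p_g)$: it simulates \textsc{Trust} and \textsc{Greedy} on the input and maintains a set $S$ (initially empty); on arrival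 of $I$: if $I$ overlaps an interval in $S$, reject; else if both \textsc{Trust} and \textsc{Greedy} accept $I$, add $I$ to $S$; else if only \textsc{Trust} accepts $I$, add $I$ to $S$ with probability $p_t$; else if only \textsc{Greedy} accepts $I$, add $I$ to $S$ with probability $p_g$; else reject (all coin flips independent). The output is $S$, and $\textsc{Alg}(\mathcal{I})=S$.
   Formalization: The binary prediction $\hat{\mathbf{O}}$ ranges only over predictions whose intervals with $\hat o_j=1$ are pairwise non-overlapping, so the output of Trust is itself a feasible schedule. The paper assumes this as well. *)

(* Defs.v *)
From HB Require Import structures.
From mathcomp Require Import all_boot all_order all_algebra.
Set Implicit Arguments. Unset Strict Implicit. Unset Printing Implicit Defensive.
Import Order.TTheory GRing.Theory Num.Theory.
Local Open Scope ring_scope.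

Section Sched.
Variable R : realFieldType.

(* An job x = (r, d): release time x.1, deadline x.2. *)
Definition job := (R * R)%type.
Definition len (J0 : job) : R := J0.2 - J0.1.
(* Intervals [r1,d1) and [r2,d2) overlap iff they share a point of positive measure. *)
Definition overlap (J0 J : job) : bool := (J0.1 < J.2) && (J.1 < J0.2).
Definition feasible (s : seq job) : bool := pairwise (fun J0 J => ~~ overlap J0 J) s.
Definition total_len (s : seq job) : R := \sum_(J0 <- s) len J0.

Definition valid_instance (s : seq job) : bool :=
  all (fun J0 => J0.1 < J0.2) s && sorted (fun J0 J => J0.1 <= J.1) s.

Definition opt_value (s : seq job) : R :=
  \big[Num.max/0]_(m : {ffun 'I_(size s) -> bool} | feasible (mask (codom m) s))
     total_len (mask (codom m) s).

Fixpoint greedy_aux (acc : seq job) (s : seq job) : seq bool :=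
  match s with
  | [::] => [::]
  | J0 :: s' => let a := ~~ has (overlap J0) acc in
               a :: greedy_aux (if a then J0 :: acc else acc) s'
  end.
Definition greedy_dec (s : seq job) : seq bool := greedy_aux [::] s.
Definition greedy (s : seq job) : seq job := mask (greedy_dec s) s.

Definition trust (s : seq job) (o : seq bool) : seq job := mask o s.

Definition eta (s : seq job) (o : seq bool) : R :=
  (opt_value s - total_len (trust s o)) / opt_value s.

(* SmoothMerge run with given Trust decisions t, Greedy decisions g and
   coin outcomes: a j is the p_t-coin, b j is the p_g-coin for job j. *)
Fixpoint smooth_aux (S : seq job) (s : seq job) (t g a b : seq bool)
  : seq job :=
  match s, t, g, a, b with
  | J0 :: s', ti :: t', gg :: g', aa :: a', bb :: b' =>
      let add := if has (overlap J0) S then false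
                 else if ti && gg then true
                 else if ti then aa
                 else if gg then bb
                 else false in
      smooth_aux (if add then rcons S J0 else S) s' t' g' a' b'
  | _, _, _, _, _ => S
  end.

Definition smooth_merge (s : seq job) (o a b : seq bool) : seq job :=
  smooth_aux [::] s o (greedy_dec s) a b.

Definition bern_weight (n : nat) (p : R) (c : {ffun 'I_n -> bool}) : R :=
  \prod_(i < n) (if c i then p else 1 - p).

Definition expected_alg (pt pg : R) (s : seq job) (o : seq bool) : R :=
  \sum_(a : {ffun 'I_(size s) -> bool}) \sum_(b : {ffun 'I_(size s) -> bool})
    bern_weight pt a * bern_weight pg b *
    total_len (smooth_merge s o (codom a) (codom b)).

End Sched.

(* Main.v *)
Require Import Defs.
From mathcomp Require Import all_boot all_order all_algebra.
From mathcomp Require Import ring lra.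
Import Order.TTheory GRing.Theory Num.Theory.
Set Implicit Arguments. Unset Strict Implicit. Unset Printing Implicit Defensive.
Local Open Scope ring_scope.

Section Prob.
Variable R : realFieldType.

Fixpoint Ex1 (p : R) (n : nat) (f : seq bool -> R) : R :=
  match n with
  | 0 => f [::]
  | n'.+1 => p * Ex1 p n' (fun a => f (true :: a)) + (1 - p) * Ex1 p n' (fun a => f (false :: a))
  end.

Lemma Ex1_ext p n f g : (forall a, f a = g a) -> Ex1 p n f = Ex1 p n g.
Proof.
elim: n f g => [|n IH] f g H /=; first exact: H.
by congr (_ * _ + _ * _); apply: IH => a; exact: H.
Qed.

Lemma Ex1_lin p n u v f g :
  Ex1 p n (fun a => u * f a + v * g a) = u * Ex1 p n f + v * Ex1 p n g.
Proof.
elim: n f g => [|n IH] f g //=.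
rewrite (IH (fun a => f (true :: a))) (IH (fun a => f (false :: a))); ring.
Qed.

Lemma ffun_Ex1 p n (f : seq bool -> R) :
  \sum_(a : {ffun 'I_n -> bool}) bern_weight p a * f (codom a) = Ex1 p n f.
Proof.
elim: n f => [|n IH] f.
  rewrite (big_pred1 [ffun x => false]) /=; last first.
    move=> a; rewrite /= /in_mem /=; apply/esym/eqP/ffunP => -[m i]; exfalso; by rewrite ltn0 in i.
  rewrite /bern_weight big_ord0 mul1r; congr f.
  by apply: size0nil; rewrite size_codom card_ord.
pose h : bool * {ffun 'I_n -> bool} -> {ffun 'I_n.+1 -> bool} := fun xf =>
  [ffun i : 'I_n.+1 => if unlift ord0 i is Some j then xf.2 j else xf.1].
pose k : {ffun 'I_n.+1 -> bool} -> bool * {ffun 'I_n -> bool} :=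
  fun F => (F ord0, [ffun j => F (lift ord0 j)]).
rewrite (reindex h) /=; last first.
  exists k => [[x g] _|F _].
    rewrite /k /h /= ffunE unlift_none; congr pair; apply/ffunP => j.
    by rewrite !ffunE liftK.
  apply/ffunP => i; rewrite /h /k ffunE /=.
  case: unliftP => [j ->|->] //; by rewrite ffunE.
have Hh : forall x g, bern_weight p (h (x, g)) = (if x then p else 1 - p) * bern_weight p g
    /\ codom (h (x, g)) = x :: codom g.
  move=> x g; split.
    rewrite /bern_weight big_ord_recl /h ffunE unlift_none; congr (_ * _).
    by apply: eq_bigr => j _; rewrite ffunE liftK.
  rewrite !codomE enum_ordSl /= /h ffunE unlift_none -map_comp; congr cons.
  by apply: eq_map => j /=; rewrite ffunE liftK.
rewrite -(pair_bigA _ (fun x g => bern_weight p (h (x, g)) * f (codom (h (x, g))))) /=.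
rewrite big_bool /=.
rewrite /= -(IH (fun a => f (true :: a))) -(IH (fun a => f (false :: a))) !mulr_sumr.
congr (_ + _); apply: eq_bigr => g _.
  by have [-> ->] := Hh true g; rewrite mulrA.
by have [-> ->] := Hh false g; rewrite mulrA.
Qed.

Variables pt pg : R.

Definition coin2 (h : bool -> bool -> R) : R :=
  pt * pg * h true true + pt * (1 - pg) * h true false +
  (1 - pt) * pg * h false true + (1 - pt) * (1 - pg) * h false false.

Lemma coin2_ext h1 h2 : (forall x y, h1 x y = h2 x y) -> coin2 h1 = coin2 h2.
Proof. by move=> H; rewrite /coin2 !H. Qed.

Fixpoint Ex2 (n : nat) (F : seq bool -> seq bool -> R) : R :=
  match n with
  | 0 => F [::] [::]
  | n'.+1 => coin2 (fun x y => Ex2 n' (fun a b => F (x :: a) (y :: b)))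
  end.

Lemma Ex1_Ex2 n F : Ex1 pt n (fun a => Ex1 pg n (fun b => F a b)) = Ex2 n F.
Proof.
elim: n F => [|n IH] F //=.
rewrite (Ex1_lin pt n pg (1 - pg) (fun a => Ex1 pg n (fun b => F (true :: a) (true :: b)))
   (fun a => Ex1 pg n (fun b => F (true :: a) (false :: b)))).
rewrite (Ex1_lin pt n pg (1 - pg) (fun a => Ex1 pg n (fun b => F (false :: a) (true :: b)))
   (fun a => Ex1 pg n (fun b => F (false :: a) (false :: b)))).
rewrite !IH /coin2; ring.
Qed.

Lemma Ex2_ext n F G : (forall a b, size a = n -> size b = n -> F a b = G a b) ->
  Ex2 n F = Ex2 n G.
Proof.
elim: n F G => [|n IH] F G H /=; first exact: H.
rewrite /coin2; congr (_ + _ + _ + _); congr (_ * _); apply: IH => a b Ha Hb;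
  by apply: H; rewrite /= ?Ha ?Hb.
Qed.

Lemma Ex2_add n F G : Ex2 n (fun a b => F a b + G a b) = Ex2 n F + Ex2 n G.
Proof.
elim: n F G => [|n IH] F G //=; rewrite /coin2 !IH; ring.
Qed.

Lemma Ex2_scale n c F : Ex2 n (fun a b => c * F a b) = c * Ex2 n F.
Proof.
elim: n F => [|n IH] F //=; rewrite /coin2 !IH; ring.
Qed.

Lemma Ex2_const n c : Ex2 n (fun _ _ => c) = c.
Proof.
elim: n => [|n IH] //=; rewrite /coin2 IH; ring.
Qed.

Lemma Ex2_sum n m (F : nat -> seq bool -> seq bool -> R) :
  Ex2 n (fun a b => \sum_(i < m) F i a b) = \sum_(i < m) Ex2 n (F i).
Proof.
elim: m => [|m IH].
  rewrite big_ord0; transitivity (Ex2 n (fun _ _ => 0)); last exact: Ex2_const.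
  apply: Ex2_ext => a b _ _; by rewrite big_ord0.
rewrite big_ord_recr /= -IH -Ex2_add; apply: Ex2_ext => a b _ _; by rewrite big_ord_recr.
Qed.

Lemma coin2_le h1 h2 : 0 <= pt <= 1 -> 0 <= pg <= 1 ->
  (forall x y, h1 x y <= h2 x y) -> coin2 h1 <= coin2 h2.
Proof.
move=> /andP[t0 t1] /andP[g0 g1] H; rewrite /coin2.
have w1 : 0 <= pt * pg by apply: mulr_ge0.
have w2 : 0 <= pt * (1 - pg) by apply: mulr_ge0; lra.
have w3 : 0 <= (1 - pt) * pg by apply: mulr_ge0; lra.
have w4 : 0 <= (1 - pt) * (1 - pg) by apply: mulr_ge0; lra.
by rewrite !lerD // ler_wpM2l.
Qed.

Lemma Ex2_le n F G : 0 <= pt <= 1 -> 0 <= pg <= 1 ->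
  (forall a b, size a = n -> size b = n -> F a b <= G a b) -> Ex2 n F <= Ex2 n G.
Proof.
move=> ht hg; elim: n F G => [|n IH] F G H /=; first exact: H.
apply: coin2_le => // x y; apply: IH => a b Ha Hb; by apply: H; rewrite /= ?Ha ?Hb.
Qed.

Lemma Ex2_cat k m F : Ex2 (k + m) F =
  Ex2 k (fun a b => Ex2 m (fun a' b' => F (a ++ a') (b ++ b'))).
Proof.
elim: k F => [|k IH] F; first by [].
rewrite addSn /=; apply: coin2_ext => x y.
by rewrite IH.
Qed.

Lemma Ex2_trunc k n F : (k <= n)%N ->
  (forall a b a' b', size a = k -> size b = k -> F (a ++ a') (b ++ b') = F a b) ->
  Ex2 n F = Ex2 k F.
Proof.
move=> kn H; rewrite -(subnKC kn) Ex2_cat; apply: Ex2_ext => a b Ha Hb.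
rewrite -(Ex2_const (n - k) (F a b)); apply: Ex2_ext => a' b' _ _; exact: H.
Qed.

Lemma Ex2_split i n F G : (i < n)%N ->
  (forall a b a' b' x y, size a = i -> size b = i ->
     F (a ++ x :: a') (b ++ y :: b') = G a b x y) ->
  Ex2 n F = Ex2 i (fun a b => coin2 (G a b)).
Proof.
move=> iN H; rewrite -(subnKC (ltnW iN)) Ex2_cat; apply: Ex2_ext => a b Ha Hb.
case E: (n - i)%N => [|m]; first by move: iN; rewrite -subn_gt0 E.
rewrite /=; apply: coin2_ext => x y.
rewrite -(Ex2_const m (G a b x y)); apply: Ex2_ext => a' b' _ _; exact: H.
Qed.

End Prob.

Section Comb.
Variable R : realFieldType.
Local Notation job := (job R).
Definition x0 : job := (0, 0).

Definition coinf (t g x y : bool) : bool :=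
  if t && g then true else if t then x else if g then y else false.

Fixpoint dec_aux (S s : seq job) (t g a b : seq bool) : seq bool :=
  match s, t, g, a, b with
  | J0 :: s', ti :: t', gg :: g', aa :: a', bb :: b' =>
      let add := ~~ has (overlap J0) S && coinf ti gg aa bb in
      add :: dec_aux (if add then rcons S J0 else S) s' t' g' a' b'
  | _, _, _, _, _ => [::]
  end.

Lemma smooth_dec S s t g a b :
  smooth_aux S s t g a b = S ++ mask (dec_aux S s t g a b) s.
Proof.
elim: s S t g a b => [|J s IH] S [|ti t] [|gg g] [|x a] [|y b] /=; rewrite ?cats0 //.
have -> : (if has (overlap J) S then false else if ti && gg then true else if ti then x
   else if gg then y else false) = ~~ has (overlap J) S && coinf ti gg x y.
  by rewrite /coinf; case: (has _ _).
rewrite IH; case: (~~ _ && _) => //; by rewrite cat_rcons.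
Qed.

Lemma dec_take k S s t g a b :
  dec_aux S s t g (take k a) (take k b) = take k (dec_aux S s t g a b).
Proof.
elim: s S t g a b k => [|J s IH] S [|ti t] [|gg g] [|x a] [|y b] [|k] //=;
  rewrite ?take0 //.
by rewrite IH.
Qed.

Lemma size_dec_ge k S s t g a b : (k <= size s)%N -> (k <= size t)%N -> (k <= size g)%N ->
  (k <= size a)%N -> (k <= size b)%N -> (k <= size (dec_aux S s t g a b))%N.
Proof.
elim: s S t g a b k => [|J s IH] S [|ti t] [|gg g] [|x a] [|y b] [|k] //=.
rewrite !ltnS; exact: IH.
Qed.

Lemma size_dec_le S s t g a b : (size (dec_aux S s t g a b) <= size s)%N.
Proof.
elim: s S t g a b => [|J s IH] S [|ti t] [|gg g] [|x a] [|y b] //=.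
by rewrite ltnS.
Qed.

Lemma dec_nth i S s t g a b : (i < size s)%N -> (i < size t)%N -> (i < size g)%N ->
  (i < size a)%N -> (i < size b)%N ->
  nth false (dec_aux S s t g a b) i =
  ~~ has (overlap (nth x0 s i)) (S ++ mask (take i (dec_aux S s t g a b)) (take i s)) &&
  coinf (nth false t i) (nth false g i) (nth false a i) (nth false b i).
Proof.
elim: s S t g a b i => [|J s IH] S [|ti t] [|gg g] [|x a] [|y b] [|i] //=.
  by rewrite cats0.
rewrite !ltnS => *; rewrite IH //.
by case: (~~ has (overlap J) S && coinf ti gg x y) => //=; rewrite cat_rcons.
Qed.

Lemma has_mask_idx (T : Type) (p : pred T) m s (y0 : T) : size m = size s ->
  has p (mask m s) = has (fun j => nth false m j && p (nth y0 s j)) (iota 0 (size s)).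
Proof.
elim: s m => [|x s IH] [|b m] //= [] /IH Hm.
have -> : iota 1 (size s) = map (addn 1) (iota 0 (size s)) by rewrite -iotaDl.
rewrite has_map.
have -> : has (preim (addn 1) (fun j => nth false (b :: m) j && p (nth y0 (x :: s) j)))
   (iota 0 (size s)) = has (fun j => nth false m j && p (nth y0 s j)) (iota 0 (size s)).
  by apply: eq_has => j /=.
by case: b => /=; rewrite Hm.
Qed.

Lemma has_mask_take (T : Type) (p : pred T) m s (y0 : T) i : (i <= size m)%N -> (i <= size s)%N ->
  has p (mask (take i m) (take i s)) =
  has (fun j => nth false m j && p (nth y0 s j)) (iota 0 i).
Proof.
move=> hm hs; rewrite (@has_mask_idx _ _ _ _ y0); last by rewrite !size_takel.
rewrite size_takel //; apply: eq_in_has => j; rewrite mem_iota add0n /= => hj.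
by rewrite !nth_take.
Qed.

Lemma dec_char i s t g a b : (i < size s)%N -> (i < size t)%N -> (i < size g)%N ->
  (i < size a)%N -> (i < size b)%N ->
  nth false (dec_aux [::] s t g a b) i =
  ~~ has (fun j => nth false (dec_aux [::] s t g a b) j && overlap (nth x0 s i) (nth x0 s j))
     (iota 0 i) &&
  coinf (nth false t i) (nth false g i) (nth false a i) (nth false b i).
Proof.
move=> *; rewrite dec_nth // cat0s (@has_mask_take _ _ _ _ x0) //; last exact: ltnW.
by apply: ltnW; apply: size_dec_ge.
Qed.

Lemma size_greedy_aux (acc s : seq job) : size (greedy_aux acc s) = size s.
Proof. by elim: s acc => [|J s IH] acc //=; rewrite IH. Qed.

Lemma gaux_nth i (acc s : seq job) : (i < size s)%N ->
  nth false (greedy_aux acc s) i =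
  ~~ (has (overlap (nth x0 s i)) acc ||
      has (overlap (nth x0 s i)) (mask (take i (greedy_aux acc s)) (take i s))).
Proof.
elim: s acc i => [|J s IH] acc [|i] //=.
  by rewrite orbF.
rewrite ltnS => hi; rewrite IH //.
case: (has (overlap J) acc) => /=; first by [].
by rewrite /= orbA (orbC _ (overlap _ J)).
Qed.

Lemma greedy_char i (s : seq job) : (i < size s)%N ->
  nth false (greedy_dec s) i =
  ~~ has (fun j => nth false (greedy_dec s) j && overlap (nth x0 s i) (nth x0 s j)) (iota 0 i).
Proof.
move=> hi; rewrite /greedy_dec gaux_nth //= (@has_mask_take _ _ _ _ x0) //; last exact: ltnW.
by rewrite size_greedy_aux ltnW.
Qed.

Lemma overlapC (J K : job) : overlap J K = overlap K J.
Proof. by rewrite /overlap andbC. Qed.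

Lemma total_len_mask m (s : seq job) : size m = size s ->
  total_len (mask m s) = \sum_(i < size s) (nth false m i)%:R * len (nth x0 s i).
Proof.
rewrite /total_len; elim: s m => [|x s IH] [|b m] //=.
  by rewrite big_nil big_ord0.
case=> /IH Hm.
rewrite big_ord_recl /= -Hm; case: b => /=; rewrite ?big_cons; ring.
Qed.

End Comb.

Lemma pairwise_mask_nth (T : eqType) (r : rel T) m s (y0 : T) j k :
  pairwise r (mask m s) -> size m = size s -> (j < k < size s)%N ->
  nth false m j -> nth false m k -> r (nth y0 s j) (nth y0 s k).
Proof.
elim: s m j k => [|x s IH] [|b m] [|j] [|k] //=.
- case: b => //= /andP[/allP Ha _] [Hs] hk _ hm.
  apply: Ha; elim: s m k Hs hk hm {IH} => [|z s IH'] [|c m] [|k] //= [Hs] hk.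
    by move=> ->; rewrite mem_head.
  by case: c => /= hm; [rewrite in_cons IH' ?orbT | rewrite IH'].
- move=> Hp [Hs] hjk hj hk; apply: (IH m) => //.
  by case: b Hp => //= /andP[].
Qed.

Section Inst.
Variable R : realFieldType.
Variables pt pg : R.
Hypothesis hpt : 0 <= pt <= 1.
Hypothesis hpg : 0 <= pg <= 1.
Variable s : seq (job R).
Variable o : seq bool.
Hypothesis hs : valid_instance s.
Hypothesis ho : size o = size s.
Hypothesis hfeas : feasible (trust s o).

Local Notation n := (size s).
Local Notation gd := (greedy_dec s).
Local Notation sj j := (nth (x0 R) s j).
Local Notation tj j := (nth false o j).
Local Notation gj j := (nth false gd j).

Definition dd a b := dec_aux [::] s o gd a b.
Definition Pr j := Ex2 pt pg n (fun a b => (nth false (dd a b) j)%:R).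
Definition Hblk i a b :=
  has (fun j => nth false (dd a b) j && overlap (sj i) (sj j)) (iota 0 i).

Lemma size_gd : size gd = n.
Proof. exact: size_greedy_aux. Qed.

Lemma dd_trunc j k a b : (j < k)%N ->
  nth false (dd a b) j = nth false (dd (take k a) (take k b)) j.
Proof. by move=> jk; rewrite /dd dec_take nth_take. Qed.

Lemma Hblk_trunc i a b : Hblk i a b = Hblk i (take i a) (take i b).
Proof.
apply: eq_in_has => j; rewrite mem_iota add0n /= => hj.
by rewrite (dd_trunc _ _ hj).
Qed.

Lemma dd_char i a b : (i < n)%N -> (i < size a)%N -> (i < size b)%N ->
  nth false (dd a b) i = ~~ Hblk i a b && coinf (tj i) (gj i) (nth false a i) (nth false b i).
Proof.
move=> hi ha hb; rewrite /dd dec_char // ?ho ?size_gd //.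
Qed.

Lemma P_step i : (i < n)%N ->
  Pr i = coin2 pt pg (fun x y => (coinf (tj i) (gj i) x y)%:R) *
         (1 - Ex2 pt pg n (fun a b => (Hblk i a b)%:R)).
Proof.
move=> hi; rewrite /Pr.
rewrite (@Ex2_split _ pt pg i n _ (fun a b x y => (~~ Hblk i a b && coinf (tj i) (gj i) x y)%:R) hi);
  last first.
  move=> a b a' b' x y Ha Hb.
  have sa : (i < size (a ++ x :: a'))%N by rewrite size_cat /= Ha addnS ltnS leq_addr.
  have sb : (i < size (b ++ y :: b'))%N by rewrite size_cat /= Hb addnS ltnS leq_addr.
  rewrite dd_char // !nth_cat Ha Hb ltnn subnn /= Hblk_trunc !take_size_cat // -Hblk_trunc.
set q := coin2 _ _ _.
rewrite (@Ex2_trunc _ pt pg i n (fun a b => (Hblk i a b)%:R)); last 2 first.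
- exact: ltnW.
- by move=> a b a' b' Ha Hb; rewrite Hblk_trunc !take_size_cat // -Hblk_trunc.
transitivity (Ex2 pt pg i (fun a b => q * 1 + (- q) * (Hblk i a b)%:R)).
  apply: Ex2_ext => a b _ _; rewrite /q /coin2; case: (Hblk i a b) => /=; ring.
rewrite Ex2_add (Ex2_scale _ _ _ q (fun _ _ => 1)) Ex2_scale Ex2_const; ring.
Qed.

Lemma hpos j : (j < n)%N -> (sj j).1 < (sj j).2.
Proof. by move=> hj; move: hs => /andP[/(all_nthP (x0 R)) H _]; apply: H. Qed.

Lemma hsort j k : (j <= k)%N -> (k < n)%N -> (sj j).1 <= (sj k).1.
Proof.
move: hs => /andP[_ Hs] jk hk.
have tr : transitive (fun J0 J : job R => J0.1 <= J.1) by move=> y x z; apply: le_trans.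
have rf : reflexive (fun J0 J : job R => J0.1 <= J.1) by move=> x; apply: lexx.
apply: (sorted_leq_nth tr rf (x0 R) Hs) => //; rewrite inE //=.
exact: (leq_ltn_trans jk hk).
Qed.

Lemma ov3 j k i : (j < k)%N -> (k <= i)%N -> (i < n)%N ->
  overlap (sj i) (sj j) -> overlap (sj i) (sj k) -> overlap (sj j) (sj k).
Proof.
move=> jk ki hi; rewrite /overlap => /andP[h1 h2] /andP[h3 h4].
have kn : (k < n)%N by apply: leq_ltn_trans ki hi.
have e1 := hsort (ltnW jk) kn; have e2 := hsort ki hi; have e3 := hpos kn.
apply/andP; split; first exact: le_lt_trans e1 e3.
exact: le_lt_trans e2 h1.
Qed.

Lemma trust_ok j k : (j < k)%N -> (k < n)%N -> tj j -> tj k -> ~~ overlap (sj j) (sj k).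
Proof.
move=> jk kn hj hk.
have := @pairwise_mask_nth _ (fun J0 J => ~~ overlap J0 J) o s (x0 R) j k hfeas ho.
by rewrite jk kn; apply.
Qed.

Lemma greedy_ok j k : (j < k)%N -> (k < n)%N -> gj j -> gj k -> ~~ overlap (sj j) (sj k).
Proof.
move=> jk kn hj; rewrite greedy_char // => /hasPn H.
have := H j; rewrite mem_iota add0n jk hj /= overlapC; by apply.
Qed.

Lemma greedy_rej i : (i < n)%N -> ~~ gj i ->
  exists2 G, (G < i)%N & gj G && overlap (sj i) (sj G).
Proof.
move=> hi; rewrite greedy_char // negbK => /hasP[G]; rewrite mem_iota add0n => /andP[_ hG] H.
by exists G.
Qed.

Lemma dd_tg a b j : size a = n -> size b = n -> (j < n)%N -> nth false (dd a b) j ->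
  tj j || gj j.
Proof.
move=> ha hb hj; rewrite dd_char ?ha ?hb // => /andP[_].
by rewrite /coinf; case: (tj j); case: (gj j).
Qed.

Lemma uniq_ov (Q : nat -> bool) i j k :
  (forall j k, (j < k)%N -> (k < n)%N -> Q j -> Q k -> ~~ overlap (sj j) (sj k)) ->
  (j < i)%N -> (k < i)%N -> (i < n)%N -> Q j -> Q k ->
  overlap (sj i) (sj j) -> overlap (sj i) (sj k) -> j = k.
Proof.
move=> HQ ji ki hi qj qk oj ok.
case: (ltngtP j k) => // [jk|kj].
  have := HQ j k jk (ltn_trans ki hi) qj qk.
  by rewrite (ov3 jk (ltnW ki) hi oj ok).
have := HQ k j kj (ltn_trans ji hi) qk qj.
by rewrite (ov3 kj (ltnW ji) hi ok oj).
Qed.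

Lemma Hblk_one i J a b : (J < i)%N -> overlap (sj i) (sj J) ->
  (forall j, (j < i)%N -> nth false (dd a b) j -> overlap (sj i) (sj j) -> j = J) ->
  Hblk i a b = nth false (dd a b) J.
Proof.
move=> Ji oJ H; apply/hasP/idP.
  move=> [j]; rewrite mem_iota add0n => /andP[_ hj] /andP[dj ov].
  by rewrite -(H j).
move=> dJ; exists J; first by rewrite mem_iota add0n.
by rewrite dJ.
Qed.

Lemma Hblk_none i a b :
  (forall j, (j < i)%N -> nth false (dd a b) j -> overlap (sj i) (sj j) -> False) ->
  Hblk i a b = false.
Proof.
move=> H; apply/hasP => -[j]; rewrite mem_iota add0n => /andP[_ hj] /andP[dj ov].
exact: (H j).
Qed.

Lemma q_val t g : coin2 pt pg (fun x y => (coinf t g x y)%:R) =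
  if t && g then 1 else if t then pt else if g then pg else 0.
Proof. rewrite /coin2 /coinf; case: t; case: g => /=; ring. Qed.

Lemma Ex2_ind01 m (X : seq bool -> seq bool -> bool) :
  0 <= Ex2 pt pg m (fun a b => (X a b)%:R) <= 1.
Proof.
apply/andP; split.
  rewrite -(Ex2_const pt pg m 0); apply: Ex2_le => // a b _ _; by case: (X a b).
rewrite -[X in _ <= X](Ex2_const pt pg m 1); apply: Ex2_le => // a b _ _; by case: (X a b).
Qed.

Lemma Pr_bounds j : 0 <= Pr j <= 1.
Proof. exact: Ex2_ind01. Qed.

Lemma both_step i : (i < n)%N -> tj i -> gj i -> Pr i = 1.
Proof.
move=> hi ht hg; rewrite P_step // q_val ht hg /=.
rewrite (@Ex2_ext _ pt pg n _ (fun _ _ => 0)) ?Ex2_const; first by rewrite subr0 mulr1.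
move=> a b ha hb; rewrite Hblk_none //= => j ji dj ov.
have jn := ltn_trans ji hi.
case/orP: (dd_tg ha hb jn dj) => h.
  by move: (trust_ok ji hi h ht); rewrite overlapC ov.
by move: (greedy_ok ji hi h hg); rewrite overlapC ov.
Qed.

Lemma trust_only_step J : (J < n)%N -> tj J -> ~~ gj J ->
  exists2 G, (G < J)%N & [/\ gj G, ~~ tj G & Pr J = pt * (1 - Pr G)].
Proof.
move=> hJ ht hg; have [G GJ /andP[gG oG]] := greedy_rej hJ hg.
exists G => //; split => //.
  apply/negP => tG; move: (trust_ok GJ hJ tG ht); by rewrite overlapC oG.
rewrite P_step // q_val ht (negbTE hg) /=; congr (_ * (1 - _)).
apply: Ex2_ext => a b ha hb; rewrite (@Hblk_one J G) //.
move=> j jJ dj ov; have jn := ltn_trans jJ hJ.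
case/orP: (dd_tg ha hb jn dj) => h.
  by move: (trust_ok jJ hJ h ht); rewrite overlapC ov.
exact: (@uniq_ov (fun j => gj j) J j G greedy_ok).
Qed.

Lemma greedy_only_step i : (i < n)%N -> gj i -> ~~ tj i ->
  (Pr i = pg) \/ exists2 J, (J < i)%N & [/\ tj J, ~~ gj J & Pr i = pg * (1 - Pr J)].
Proof.
move=> hi hg ht.
case: (boolP (has (fun j => tj j && overlap (sj i) (sj j)) (iota 0 i))).
  move=> /hasP[J]; rewrite mem_iota add0n => /andP[_ Ji] /andP[tJ oJ].
  right; exists J => //; split => //.
    apply/negP => gJ; move: (greedy_ok Ji hi gJ hg); by rewrite overlapC oJ.
  rewrite P_step // q_val (negbTE ht) hg /=; congr (_ * (1 - _)).
  apply: Ex2_ext => a b ha hb; rewrite (@Hblk_one i J) //.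
  move=> j ji dj ov; have jn := ltn_trans ji hi.
  case/orP: (dd_tg ha hb jn dj) => h.
    exact: (@uniq_ov (fun j => tj j) i j J trust_ok).
  by move: (greedy_ok ji hi h hg); rewrite overlapC ov.
move=> /hasPn H; left.
rewrite P_step // q_val (negbTE ht) hg /=.
rewrite (@Ex2_ext _ pt pg n _ (fun _ _ => 0)) ?Ex2_const; first by rewrite subr0 mulr1.
move=> a b ha hb; rewrite Hblk_none //= => j ji dj ov.
have jn := ltn_trans ji hi.
case/orP: (dd_tg ha hb jn dj) => h.
  by have := H j; rewrite mem_iota add0n ji h ov => /(_ isT).
by move: (greedy_ok ji hi h hg); rewrite overlapC ov.
Qed.

Lemma claim_G (c : R) : c * (1 - pt * pg) = pg * (1 - pt) -> 0 <= c -> c <= pg ->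
  forall i, (i < n)%N -> gj i -> c <= Pr i.
Proof.
move=> hc1 hc0 hc2 i; elim/ltn_ind: i => i IH hi hg.
case: (boolP (tj i)) => ht.
  rewrite both_step //; case/andP: hpg => _ ?; exact: le_trans hc2 _.
case: (greedy_only_step hi hg ht) => [->|[J Ji [tJ gJ ->]]] //.
have hJ := ltn_trans Ji hi.
have [G GJ [gG _ ->]] := trust_only_step hJ tJ gJ.
have cG := IH G (ltn_trans GJ Ji) (ltn_trans GJ hJ) gG.
case/andP: hpt => t0 t1; case/andP: hpg => g0 g1.
set PG := Pr G in cG *.
have e : pg * (1 - pt * (1 - PG)) - c = pt * pg * (PG - c).
  have -> : pg * (1 - pt * (1 - PG)) - c = pg * (1 - pt) - c * (1 - pt * pg) + pt * pg * (PG - c)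
    by ring.
  by rewrite hc1 subrr add0r.
rewrite -subr_ge0 e; apply: mulr_ge0; first exact: mulr_ge0.
by rewrite subr_ge0.
Qed.

Lemma claim_T i : (i < n)%N -> tj i -> pt * (1 - pg) <= Pr i.
Proof.
move=> hi ht; case/andP: hpt => t0 t1; case/andP: hpg => g0 g1.
case: (boolP (gj i)) => hg.
  rewrite both_step //.
  have : pt * (1 - pg) <= 1 * 1 by apply: ler_pM; lra.
  by rewrite mulr1.
have [G Gi [gG tG ->]] := trust_only_step hi ht hg.
apply: ler_wpM2l => //; rewrite lerD2l lerN2.
have hG := ltn_trans Gi hi.
case: (greedy_only_step hG gG tG) => [->|[J _ [_ _ ->]]] //.
have := Pr_bounds J => /andP[h0 h1].
rewrite -[X in _ <= X]mulr1; apply: ler_wpM2l => //; lra.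
Qed.

End Inst.
Unset Implicit Arguments.

Theorem mainTheorem5 (R : realFieldType) (pt pg : R)
  (hpt : 0 <= pt <= 1) (hpg : 0 <= pg <= 1) (hprod : pt * pg < 1)
  (s : seq (job R)) (o : seq bool)
  (hs : valid_instance s) (ho : size o = size s)
  (hfeas : feasible (trust s o)) :
  Num.max (opt_value s * (1 - eta s o) * (pt * (1 - pg)))
          ((pg - pt * pg) / (1 - pt * pg) * total_len (greedy s))
    <= expected_alg pt pg s o.
Proof.
set n := size s.
set gd := greedy_dec s.
set sj := fun j => nth (x0 R) s j.
have hlen : forall i, (i < n)%N -> 0 <= len (sj i).
  move=> i hi; rewrite /len subr_ge0; apply: ltW; exact: (hpos hs hi).
have HE : expected_alg pt pg s o = \sum_(i < n) Pr pt pg s o i * len (sj i).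
  rewrite /expected_alg.
  rewrite (eq_bigr (fun a => bern_weight pt a *
     Ex1 pg n (fun b => total_len (smooth_aux [::] s o gd (codom a) b)))); last first.
    move=> a _; rewrite -ffun_Ex1 mulr_sumr; apply: eq_bigr => b _.
    by rewrite mulrA.
  rewrite (ffun_Ex1 pt n (fun a => Ex1 pg n (fun b => total_len (smooth_aux [::] s o gd a b)))).
  rewrite Ex1_Ex2.
  rewrite (@Ex2_ext _ pt pg n _ (fun a b => \sum_(i < n) (nth false (dd s o a b) i)%:R * len (sj i)));
    last first.
    move=> a b ha hb; rewrite smooth_dec cat0s total_len_mask //.
    apply/eqP; rewrite eqn_leq size_dec_le size_dec_ge // ?ho ?ha ?hb //.
    by rewrite /gd size_greedy_aux.
  rewrite (Ex2_sum pt pg n n (fun i a b => (nth false (dd s o a b) i)%:R * len (sj i))); apply: eq_bigr => i _.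
  rewrite /Pr [RHS]mulrC -Ex2_scale; apply: Ex2_ext => a b _ _; exact: mulrC.
have HT : total_len (trust s o) = \sum_(i < n) (nth false o i)%:R * len (sj i).
  exact: total_len_mask.
have HG : total_len (greedy s) = \sum_(i < n) (nth false gd i)%:R * len (sj i).
  by apply: total_len_mask; rewrite /gd size_greedy_aux.
have Pge0 : forall i, 0 <= Pr pt pg s o i.
  by move=> i; case/andP: (Pr_bounds hpt hpg s o i).
have E0 : 0 <= expected_alg pt pg s o.
  rewrite HE; apply: sumr_ge0 => i _; apply: mulr_ge0 => //; exact: hlen.
rewrite ge_max; apply/andP; split.
  have [O0|O0] := eqVneq (opt_value s) 0.
    by rewrite O0 !mul0r.
  have -> : opt_value s * (1 - eta s o) = total_len (trust s o).
    by rewrite /eta; field.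
  rewrite HE HT mulr_suml; apply: ler_sum => i _.
  case: (boolP (nth false o i)) => ht /=.
    rewrite mul1r mulrC; apply: ler_wpM2r; first exact: hlen.
    exact: claim_T.
  rewrite mul0r mul0r; apply: mulr_ge0 => //; exact: hlen.
set c := (pg - pt * pg) / (1 - pt * pg).
have hpos1 : 0 < 1 - pt * pg by rewrite subr_gt0.
have hc1 : c * (1 - pt * pg) = pg * (1 - pt).
  rewrite /c divfK; first ring.
  by rewrite gt_eqF.
have /andP[t0 t1] := hpt; have /andP[g0 g1] := hpg.
have hc0 : 0 <= c.
  apply: divr_ge0; last exact: ltW.
  have -> : pg - pt * pg = pg * (1 - pt) by ring.
  apply: mulr_ge0 => //; lra.
have hc2 : c <= pg.
  rewrite /c ler_pdivrMr //.
  have h : 0 <= pt * pg * (1 - pg) by apply: mulr_ge0; [apply: mulr_ge0|lra].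
  rewrite -subr_ge0.
  have -> : pg * (1 - pt * pg) - (pg - pt * pg) = pt * pg * (1 - pg) by ring.
  exact: h.
rewrite HE HG mulr_sumr; apply: ler_sum => i _.
case: (boolP (nth false gd i)) => hg /=.
  rewrite mul1r; apply: ler_wpM2r; first exact: hlen.
  exact: (claim_G hpt hpg hs ho hfeas hc1).
rewrite mul0r mulr0; apply: mulr_ge0 => //; exact: hlen.
Qed.
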